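(* For every $n\ge0$, $$R_{2n}(t,c)=\frac{q_{2n}(\lambda_0,c)}{(4\lambda_0^3-c)^{5n+2}},\qquad R_{2n+1}(t,c)=\frac{\lambda_0^{1/2}\,q_{2n+1}(\lambda_0,c)}{(4\lambda_0^3-c)^{5n+9/2}},$$ for some polynomials $q_{2n},q_{2n+1}\in\mathbb C[\lambda_0,c]$ whose degrees in $\lambda_0$ are at most $9n+4$ and $9n+8$ respectively (the square roots being the branches consistent with $R_{-1}=\sqrt\Delta=\lambda_0^{-1/2}(4\lambda_0^3-c)^{1/2}$).
   Context: Let $\eta$ be a large parameter and $c\in\mathbb C$. $(H_{\rm II})$: $\frac{d\lambda}{dt}=\eta\nu$, $\frac{d\nu}{dt}=\eta(2\lambda^3+t\lambda+c)$. Let $\lambda_0(t,c)$ be a branch of $2\lambda_0^3+t\lambda_0+c=0$, so that $\Delta:=6\lambda_0^2+t=(4\lambda_0^3-c)/\lambda_0$. The 0-parameter solution $\lambda^{(0)}=\sum_{k\ge0}\eta^{-k}\lambda^{(0)}_k$, $\nu^{(0)}$ is the formal power series solution of $(H_{\rm II})$ with $\lambda^{(0)}_0=\lambda_0$, $\nu^{(0)}_0=0$. $R=\sum_{k\ge-1}\eta^{-k}R_k(t,c)$ is the formal solution of $R^2+\frac{dR}{dt}=\eta^2(6(\lambda^{(0)})^2+t)$ with $R_{-1}=\sqrt\Delta$, i.e. $R_{-1}^2=\Delta$ and $2R_{-1}R_{k+1}+\sum_{k_1+k_2=k,\,k_j\ge0}R_{k_1}R_{k_2}+\frac{dR_k}{dt}=6\sum_{l_1+l_2=k+2,\,l_j\ge0}\lambda^{(0)}_{l_1}\lambda^{(0)}_{l_2}$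 for $k\ge-1$ (the $l_1+l_2=k+2$ sum excluding nothing, with the $k=-1$ case reading $2R_{-1}R_0+\frac{dR_{-1}}{dt}=0$ after cancelling $R_{-1}^2=6\lambda_0^2+t$). *)

(* Defs.v *)
From HB Require Import structures.
From mathcomp Require Import all_boot all_order all_algebra all_field.
Set Implicit Arguments. Unset Strict Implicit. Unset Printing Implicit Defensive.
Import Order.TTheory GRing.Theory Num.Theory.
Local Open Scope ring_scope.

(* Coefficient of eta^{-m} in 2*lambda^3 + t*lambda + c, where
   lambda = sum_k eta^{-k} lam k. *)
Definition cubic_coef (K : fieldType) (t c : K) (lam : nat -> K) (m : nat) : K :=
  2 * (\sum_(i < m.+1) \sum_(j < (m - i).+1) lam i * lam j * lam (m - i - j)%N)
  + t * lam m + (if m == 0%N then c else 0).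

(* Evaluation of q in C[lambda0][c] (outer variable = lambda0, inner = c),
   coefficients mapped into K via iota, at lambda0 = x, c = y. *)
Definition peval2 (K : fieldType) (iota : {rmorphism algC -> K})
  (q : {poly {poly algC}}) (x y : K) : K :=
  ((map_poly (map_poly iota) q).[x%:P]).[y].

(* Main.v *)
Require Import Defs.
From HB Require Import structures.
From mathcomp Require Import all_boot all_order all_algebra all_field.
From mathcomp Require Import zify ring.
Import Order.TTheory GRing.Theory Num.Theory.
Set Implicit Arguments. Unset Strict Implicit. Unset Printing Implicit Defensive.
Local Open Scope ring_scope.

Lemma ord2nat (K : nmodType) (G : nat -> nat -> K) m :
  \sum_(i < m.+1) \sum_(j < (m - i).+1) G i j = \sum_(0 <= i < m.+1) \sum_(0 <= j < (m - i).+1) G i j.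
Proof.
symmetry; rewrite big_mkord; apply: eq_bigr => i _.
by rewrite big_mkord.
Qed.

Lemma triple_split (K : comNzRingType) (f : nat -> K) m : (0 < m)%N ->
  \sum_(i < m.+1) \sum_(j < (m - i).+1) f i * f j * f (m - i - j)%N
  = 3%:R * f 0%N ^+ 2 * f m +
    \sum_(i < m.+1) \sum_(j < (m - i).+1)
      (if [&& (i < m)%N, (j < m)%N & (m - i - j < m)%N] then f i * f j * f (m - i - j)%N else 0).
Proof.
move=> m0.
set C := fun (i j : nat) => [&& (i < m)%N, (j < m)%N & (m - i - j < m)%N].
have -> : \sum_(i < m.+1) \sum_(j < (m - i).+1) f i * f j * f (m - i - j)%N =
  \sum_(i < m.+1) \sum_(j < (m - i).+1) (if C i j then f i * f j * f (m - i - j)%N else 0) +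
  \sum_(i < m.+1) \sum_(j < (m - i).+1) (if C i j then 0 else f i * f j * f (m - i - j)%N).
  rewrite -big_split; apply: eq_bigr => i _; rewrite /= -big_split; apply: eq_bigr => j _.
  by rewrite /=; case: (C i j); rewrite ?addr0 ?add0r.
rewrite addrC; congr (_ + _).
rewrite /C; clear C.
have Z : forall n (F : nat -> K), (forall i, (i < n)%N -> F i = 0) -> \sum_(0 <= i < n) F i = 0.
  move=> n F h; apply: big1_seq => i /andP[_]; rewrite mem_index_iota => /andP[_ hi]; exact: h.
rewrite (@ord2nat _ (fun i j => if [&& (i < m)%N, (j < m)%N & (m - i - j < m)%N] then 0 else f i * f j * f (m - i - j)%N)).
case: m m0 => [//|m] _.
pose T i j := f i * f j * f (m.+1 - i - j)%N.
pose S i := \sum_(0 <= j < (m.+1 - i).+1)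
   (if [&& (i < m.+1)%N, (j < m.+1)%N & (m.+1 - i - j < m.+1)%N] then 0 else T i j).
rewrite (_ : \sum_(0 <= i < m.+2) _ = \sum_(0 <= i < m.+2) S i) //.
rewrite big_nat_recl // big_nat_recr //= Z; last first.
  move=> i hi; rewrite /S Z // => j hj; rewrite ifT //; lia.
have -> : S m.+1 = T m.+1 0%N.
  rewrite /S (_ : (m.+1 - m.+1).+1 = 1)%N; last by lia.
  by rewrite big_nat1 ifF //; lia.
have -> : S 0%N = T 0%N 0%N + T 0%N m.+1.
  rewrite /S subn0 big_nat_recl // big_nat_recr //= Z; last first.
    move=> i hi; rewrite ifT //; lia.
  rewrite ifF; last by lia.
  rewrite ifF; last by lia.
  by rewrite add0r.
rewrite /T !subn0 subnn.
ring.
Qed.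

Lemma parity i : exists p, i = (2 * p)%N \/ i = (2 * p).+1.
Proof.
elim: i => [|i [p [->|->]]]; first by exists 0%N; left.
  by exists p; right.
by exists p.+1; left; lia.
Qed.

Section Main.
Variables (K : fieldType) (iota : {rmorphism algC -> K}) (D : K -> K).
Hypothesis HDadd : forall x y, D (x + y) = D x + D y.
Hypothesis HDmul : forall x y, D (x * y) = D x * y + x * D y.
Hypothesis HDconst : forall a, D (iota a) = 0.

Lemma D0 : D 0 = 0.
Proof. have := HDadd 0 0; rewrite addr0 => H; apply: (addrI (D 0)); by rewrite addr0 -H. Qed.
Lemma Dnat n : D n%:R = 0.
Proof. by rewrite -(rmorph_nat iota) HDconst. Qed.
Lemma D1 : D 1 = 0.
Proof. by rewrite -(rmorph1 iota) HDconst. Qed.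
Lemma DN x : D (- x) = - D x.
Proof. by apply/eqP; rewrite -addr_eq0 -HDadd addNr D0. Qed.
Lemma DB x y : D (x - y) = D x - D y.
Proof. by rewrite HDadd DN. Qed.
Lemma DX x n : D (x ^+ n) = n%:R * x ^+ n.-1 * D x.
Proof.
elim: n => [|n IH]; first by rewrite expr0 D1 mul0r mul0r.
rewrite exprS HDmul IH /=; case: n IH => [|n] IH /=.
  by rewrite !expr0; ring.
by rewrite exprS; ring.
Qed.
Lemma DV x : x != 0 -> D (x^-1) = - D x * x^-1 ^+ 2.
Proof.
move=> x0; have H : D x * x^-1 + x * D x^-1 = 0 by rewrite -HDmul mulfV // D1.
have H2 : x * D x^-1 = - (D x * x^-1) by apply: (addrI (D x * x^-1)); rewrite H addrN.
have -> : D x^-1 = x^-1 * (x * D x^-1) by rewrite mulrA mulVf // mul1r.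
by rewrite H2; field.
Qed.

Variables (c l : K).
Hypothesis Hc : D c = 0.
Notation pv P := (peval2 iota P l c).

Lemma pvD P Q : pv (P + Q) = pv P + pv Q.
Proof. by rewrite /peval2 rmorphD /= !hornerD. Qed.
Lemma pvM P Q : pv (P * Q) = pv P * pv Q.
Proof. by rewrite /peval2 rmorphM /= !hornerM. Qed.
Lemma pvN P : pv (- P) = - pv P.
Proof. by rewrite /peval2 rmorphN /= !hornerN. Qed.
Lemma pv0 : pv 0 = 0.
Proof. by rewrite /peval2 rmorph0 /= !horner0. Qed.
Lemma pvX : pv 'X = l.
Proof. by rewrite /peval2 map_polyX hornerX hornerC. Qed.
Lemma pvc : pv ('X%:P) = c.
Proof. by rewrite /peval2 map_polyC /= map_polyX hornerC hornerX. Qed.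
Lemma pvC a : pv (a%:P%:P) = iota a.
Proof. by rewrite /peval2 map_polyC /= map_polyC /= !hornerC. Qed.

Lemma pv_constD a : D ((map_poly iota a).[c]) = 0.
Proof.
elim/poly_ind: a => [|a x IH]; first by rewrite rmorph0 horner0 D0.
by rewrite rmorphD rmorphM /= map_polyX map_polyC /= hornerD hornerMX hornerC HDadd HDmul IH Hc HDconst; ring.
Qed.

Lemma Dpv P : D (pv P) = pv (P^`()) * D l.
Proof.
elim/poly_ind: P => [|P a IH]; first by rewrite deriv0 pv0 D0 mul0r.
rewrite derivMXaddC pvD pvM pvX pvD pvM pvX HDadd HDmul IH.
have -> : pv a%:P = (map_poly iota a).[c] by rewrite /peval2 map_polyC /= hornerC.
by rewrite pv_constD; ring.
Qed.

Variable Ei : K.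
Hypothesis HEi : (4%:R * l ^+ 3 - c) * Ei = 1.

Definition inT (d b : nat) (x : K) :=
  exists P : {poly {poly algC}}, (size P <= d.+1)%N /\ x = pv P * Ei ^+ b.

Lemma pvXn n : pv 'X^n = l ^+ n.
Proof. by rewrite /peval2 map_polyXn hornerXn -rmorphXn /= hornerC. Qed.

Lemma pv1 : pv 1 = 1.
Proof. by have := pvC 1; rewrite !polyC1 rmorph1. Qed.

Definition Ep : {poly {poly algC}} := 'X^3 * ((4%:R : algC)%:P%:P) - 'X%:P.
Lemma pvEp : pv Ep = 4%:R * l ^+ 3 - c.
Proof. by rewrite /Ep pvD pvN pvM pvC rmorph_nat pvc pvXn mulrC. Qed.
Lemma size_Ep : (size Ep <= 4)%N.
Proof.
rewrite /Ep; apply: (leq_trans (size_add _ _)); rewrite size_opp geq_max; apply/andP; split.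
  apply: (leq_trans (size_mul_leq _ _)); rewrite size_polyXn size_polyC.
  by case: (_ != 0).
by rewrite size_polyC; case: (_ != 0).
Qed.

Lemma size_mulb (p q : {poly {poly algC}}) m n :
  (size p <= m.+1)%N -> (size q <= n.+1)%N -> (size (p * q)%R <= (m + n).+1)%N.
Proof. move=> hp hq; apply: (leq_trans (size_mul_leq _ _)); lia. Qed.

Lemma inT_le d d' b x : (d <= d')%N -> inT d b x -> inT d' b x.
Proof. by move=> h [P [hP ->]]; exists P; split=> //; apply: leq_trans hP _. Qed.

Lemma inT_lift1 d b x : inT d b x -> inT (d + 3) b.+1 x.
Proof.
move=> [P [hP ->]]; exists (P * Ep); split.
  apply: (leq_trans (size_mul_leq _ _)); have := size_Ep; lia.
transitivity (pv P * Ei ^+ b * ((4%:R * l ^+ 3 - c) * Ei)); first by rewrite HEi mulr1.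
by rewrite pvM pvEp [Ei ^+ b.+1]exprS; ring.
Qed.

Lemma inT_lift d b d' b' x : (b <= b')%N -> (d + 3 * (b' - b) <= d')%N -> inT d b x -> inT d' b' x.
Proof.
move=> hb; have [k ->] : exists k, b' = (b + k)%N by exists (b' - b)%N; lia.
rewrite (_ : (b + k - b = k)%N); last by lia.
elim: k d' => [|k IH] d' hd h.
  by rewrite addn0; apply: inT_le h; lia.
rewrite addnS; apply: (@inT_le (d + 3 * k + 3)); first by lia.
by apply: inT_lift1; apply: IH h; lia.
Qed.

Lemma inT_add d b x y : inT d b x -> inT d b y -> inT d b (x + y).
Proof.
move=> [P [hP ->]] [Q [hQ ->]]; exists (P + Q); split; last by rewrite pvD mulrDl.
by apply: (leq_trans (size_add _ _)); rewrite geq_max hP hQ.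
Qed.

Lemma inT_opp d b x : inT d b x -> inT d b (- x).
Proof. by move=> [P [hP ->]]; exists (- P); rewrite size_opp pvN mulNr. Qed.

Lemma inT_mul d1 b1 d2 b2 x y : inT d1 b1 x -> inT d2 b2 y -> inT (d1 + d2) (b1 + b2) (x * y).
Proof.
move=> [P [hP ->]] [Q [hQ ->]]; exists (P * Q); split.
  by apply: (leq_trans (size_mul_leq _ _)); lia.
by rewrite pvM exprD; ring.
Qed.

Lemma inT_iota a : inT 0 0 (iota a).
Proof. by exists (a%:P%:P); rewrite pvC expr0 mulr1 size_polyC; case: (_ != 0). Qed.
Lemma inT_nat n : inT 0 0 n%:R.
Proof. by rewrite -(rmorph_nat iota); apply: inT_iota. Qed.
Lemma inT_0 d b : inT d b 0.
Proof. by exists 0; rewrite pv0 mul0r size_poly0. Qed.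
Lemma inT_l : inT 1 0 l.
Proof. by exists 'X; rewrite pvX expr0 mulr1 size_polyX. Qed.
Lemma inT_Ei : inT 0 1 Ei.
Proof. by exists 1; rewrite pv1 mul1r expr1 size_poly1. Qed.

Lemma inT_sum d b n (F : nat -> K) : (forall i, (i < n)%N -> inT d b (F i)) ->
  inT d b (\sum_(i < n) F i).
Proof.
move=> h; elim: n h => [|n IH] h; first by rewrite big_ord0; apply: inT_0.
rewrite big_ord_recr /=; apply: inT_add; first by apply: IH => i hi; apply: h; lia.
by apply: h.
Qed.

Lemma inT_sumo d b n (F : 'I_n -> K) : (forall i, inT d b (F i)) ->
  inT d b (\sum_(i < n) F i).
Proof. by move=> h; apply: big_ind => //; [apply: inT_0|apply: inT_add]. Qed.

Hypothesis HDl : D l = - l ^+ 2 * Ei.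
Hypothesis HDEi : D Ei = 12%:R * l ^+ 4 * Ei ^+ 3.

Lemma DEib b : D (Ei ^+ b) = (12 * b)%:R * l ^+ 4 * Ei ^+ (b + 2).
Proof.
rewrite DX HDEi; case: b => [|b]; first by rewrite muln0 !mul0r.
by rewrite /= -addn1 natrM !exprD; ring.
Qed.

Lemma inT_D d b x : inT d b x -> inT (d + 4) (b + 2) (D x).
Proof.
move=> [P [hP ->]]; rewrite HDmul Dpv HDl DEib.
have hP' : (size P^`() <= d)%N.
  have [->|nz] := eqVneq P 0; first by rewrite deriv0 size_poly0.
  by have := lt_size_deriv nz; lia.
apply: inT_add.
  apply: (@inT_lift (d + 1) (b + 1)); [lia| lia|].
  exists (P^`() * (- 'X^2)); split.
    apply: (leq_trans (size_mul_leq _ _)); rewrite size_opp size_polyXn; lia.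
  by rewrite pvM pvN pvXn exprD; ring.
exists (P * (((12 * b)%N%:R : algC)%:P%:P * 'X^4)); split.
  rewrite (_ : (d + 4).+1 = (d + (0 + 4)).+1)%N //; apply: size_mulb => //.
  apply: size_mulb; last by rewrite size_polyXn.
  by rewrite size_polyC; case: (_ != 0).
by rewrite !pvM pvC pvX rmorph_nat; ring.
Qed.

Definition dL a := if a is 0 then 1%N else (9 * a - 2)%N.
Definition bL a := if a is 0 then 0%N else (5 * a - 1)%N.

Lemma inT_mul' d b d1 b1 d2 b2 x y : inT d1 b1 x -> inT d2 b2 y ->
  (b1 + b2 <= b)%N -> (d1 + d2 + 3 * (b - (b1 + b2)) <= d)%N -> inT d b (x * y).
Proof. by move=> hx hy h1 h2; apply: (inT_lift h1 h2); apply: inT_mul. Qed.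

Lemma tri_bound p a b e : (a + b + e = p)%N -> (a < p)%N -> (b < p)%N -> (e < p)%N ->
  (bL a + bL b + bL e <= 5 * p - 2)%N /\
  (dL a + dL b + dL e + 3 * (5 * p - 2 - (bL a + bL b + bL e)) <= 9 * p - 3)%N.
Proof. by case: a => [|a]; case: b => [|b]; case: e => [|e]; rewrite /dL /bL; lia. Qed.

Lemma inT_lEi : inT 1 1 (l * Ei).
Proof. exact: (inT_mul inT_l inT_Ei). Qed.

Lemma inT_Dl : inT 2 1 (D l).
Proof. by rewrite HDl; exists (- 'X^2); rewrite size_opp size_polyXn pvN pvXn expr1. Qed.

Variable t : K.
Hypothesis HDelta : (6%:R * l ^+ 2 + t) * (l * Ei) = 1.
Variables lam nu : nat -> K.
Hypothesis Hlam0 : lam 0%N = l.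
Hypothesis Hnu0 : nu 0%N = 0.
Hypothesis Hlam : forall k, nu k.+1 = D (lam k).
Hypothesis Hnu : forall k, D (nu k) = cubic_coef t c lam k.+1.

Definition rest m := \sum_(i < m.+1) \sum_(j < (m - i).+1)
      (if [&& (i < m)%N, (j < m)%N & (m - i - j < m)%N] then lam i * lam j * lam (m - i - j)%N else 0).

Lemma lam_rec m : (0 < m)%N -> lam m = (D (nu m.-1) - 2%:R * rest m) * (l * Ei).
Proof.
move=> m0; case: m m0 => [//|m] _ /=.
rewrite Hnu /cubic_coef triple_split // Hlam0 /= -/(rest m.+1).
transitivity (lam m.+1 * ((6%:R * l ^+ 2 + t) * (l * Ei))); first by rewrite HDelta mulr1.
rewrite addr0; ring.
Qed.

Lemma lam_prop m : (forall p, m = (2 * p).+1 -> lam m = 0) /\ (forall p, m = (2 * p)%N -> inT (dL p) (bL p) (lam m)).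
Proof.
elim/ltn_ind: m => m IH.
have IH1 : forall i p, (i < m)%N -> i = (2 * p).+1 -> lam i = 0.
  by move=> i p hi e; apply: (IH i hi).1 e.
have IH2 : forall i p, (i < m)%N -> i = (2 * p)%N -> inT (dL p) (bL p) (lam i).
  by move=> i p hi e; apply: (IH i hi).2 e.
case: (posnP m) => [->|m0].
  split=> [p|p]; first by lia.
  move=> h; have -> : p = 0%N by lia.
  by rewrite Hlam0; apply: inT_l.
rewrite lam_rec //; split.
  move=> p hm.
  have -> : rest m = 0.
    apply: big1 => i _; apply: big1 => j _; case: ifP => // /and3P[hi hj hk].
    have hji : (j <= m - i)%N by have := ltn_ord j; lia.
    have [pi [Hi|Hi]] := parity i; last by rewrite (IH1 i pi) // !mul0r.
    have [pj [Hj|Hj]] := parity j; last by rewrite (IH1 j pj) // mulr0 mul0r.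
    have [pk [Hk|Hk]] := parity (m - i - j)%N; last by rewrite (IH1 _ pk hk Hk) mulr0.
    lia.
  case: p hm => [|p] hm.
    by rewrite hm /= Hnu0 D0 mulr0 subr0 mul0r.
  have -> : m.-1 = (2 * p).+1.+1 by lia.
  by rewrite Hlam (IH1 (2 * p).+1 p) // ?D0 ?mulr0 ?subr0 ?mul0r //; lia.
move=> p hm; case: p hm => [|p] hm; first by lia.
have hX : inT (9 * p.+1 - 3) (5 * p.+1 - 2) (D (nu m.-1) - 2%:R * rest m).
  apply: inT_add.
    case: p hm => [|p] hm.
      have -> : m.-1 = 1%N by lia.
      rewrite Hlam Hlam0; apply: (inT_lift (d := 6) (b := 3)); [lia|lia|].
      exact: inT_D inT_Dl.
    have -> : m.-1 = (2 * p.+1).+1 by lia.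
    rewrite Hlam; apply: (inT_lift (d := dL p.+1 + 4 + 4) (b := bL p.+1 + 2 + 2)); rewrite /dL /bL; [lia|lia|].
    by apply: inT_D; apply: inT_D; apply: (IH2 _ p.+1) => //; lia.
  apply: inT_opp; apply: (inT_mul' (d2 := 9 * p.+1 - 3) (b2 := 5 * p.+1 - 2) (inT_nat 2)); [|lia|lia].
  rewrite /rest; apply: inT_sumo => i; apply: inT_sumo => j.
  have hj := ltn_ord j.
  case: ifP => [/and3P[hi' hj' hk']|_]; last exact: inT_0.
  have [pi [Hi|Hi]] := parity i; last by rewrite (IH1 i pi) // !mul0r; apply: inT_0.
  have [pj [Hj|Hj]] := parity j; last by rewrite (IH1 j pj) // mulr0 mul0r; apply: inT_0.
  have [pk [Hk|Hk]] := parity (m - i - j)%N; last by rewrite (IH1 _ pk hk' Hk) mulr0; apply: inT_0.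
  have [h1 h2] := @tri_bound p.+1 pi pj pk ltac:(lia) ltac:(lia) ltac:(lia) ltac:(lia).
  apply: (inT_lift h1 h2); apply: inT_mul; first apply: inT_mul.
  - exact: (IH2 _ pi hi' Hi).
  - exact: (IH2 _ pj hj' Hj).
  - exact: (IH2 _ pk hk' Hk).
apply: (inT_mul' (d2 := 1) (b2 := 1) hX).
- by apply: (inT_mul' inT_l inT_Ei); lia.
- rewrite /bL /=; lia.
- rewrite /dL /bL /=; lia.
Qed.

Lemma lam_odd p : lam (2 * p).+1 = 0.
Proof. exact: ((lam_prop (2 * p).+1).1 p erefl). Qed.
Lemma lam_even p : inT (dL p) (bL p) (lam (2 * p)%N).
Proof. exact: ((lam_prop (2 * p)).2 p erefl). Qed.

Lemma pair_bound n p q : (p + q = n.+1)%N ->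
  (bL p + bL q <= 5 * n + 4)%N /\ (dL p + dL q + 3 * (5 * n + 4 - (bL p + bL q)) <= 9 * n + 8)%N.
Proof. by case: p => [|p]; case: q => [|q]; rewrite /dL /bL; lia. Qed.

Lemma Slam_even n : inT (9 * n + 8) (5 * n + 4)
   (\sum_(i < (2 * n).+3) lam i * lam ((2 * n).+2 - i)%N).
Proof.
apply: inT_sumo => i; have hi := ltn_ord i.
have [p [Hi|Hi]] := parity i; last by rewrite Hi lam_odd mul0r; apply: inT_0.
have [h1 h2] := @pair_bound n p (n.+1 - p) ltac:(lia).
apply: (inT_lift h1 h2); apply: inT_mul; rewrite Hi; first exact: lam_even.
rewrite (_ : ((2 * n).+2 - 2 * p = 2 * (n.+1 - p))%N); last by lia.
exact: lam_even.
Qed.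

Lemma Slam_odd n : \sum_(i < (2 * n).+4) lam i * lam ((2 * n).+3 - i)%N = 0.
Proof.
apply: big1 => i _; have hi := ltn_ord i.
have [p [Hi|Hi]] := parity i; last by rewrite Hi lam_odd mul0r.
rewrite (_ : ((2 * n).+3 - i = (2 * (n.+1 - p)).+1)%N); last by lia.
by rewrite lam_odd mulr0.
Qed.

Variables (rho Rm1 : K) (R : nat -> K).
Hypothesis HRinv : Rm1 * rho = 1.
Hypothesis Hrho2 : rho ^+ 2 = l * Ei.
Hypothesis HDrho : D rho = rho * (6%:R * l ^+ 4 * Ei ^+ 2 - 2%:R^-1 * (l * Ei)).
Hypothesis H2 : (2%:R : K) != 0.
Hypothesis HR0 : 2%:R * Rm1 * R 0%N + D Rm1 = 6%:R * \sum_(i < 2) lam i * lam (1 - i)%N.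
Hypothesis HR : forall k, 2%:R * Rm1 * R k.+1 + \sum_(i < k.+1) R i * R (k - i)%N + D (R k)
                  = 6%:R * \sum_(i < k.+3) lam i * lam (k.+2 - i)%N.

Definition inTr d b x := exists X, inT d b X /\ x = rho * X.

Lemma inTr_sumo d b n (F : 'I_n -> K) : (forall i, inTr d b (F i)) ->
  inTr d b (\sum_(i < n) F i).
Proof.
move=> h; apply: big_ind => //.
  by exists 0; split; [apply: inT_0| rewrite mulr0].
by move=> x y [X [hX ->]] [Y [hY ->]]; exists (X + Y); split; [apply: inT_add|rewrite mulrDr].
Qed.

Lemma inT_half : inT 0 0 (2%:R^-1).
Proof. by rewrite -(rmorph_nat iota) -fmorphV; apply: inT_iota. Qed.

Lemma inT_g : inT 4 2 (6%:R * l ^+ 4 * Ei ^+ 2 - 2%:R^-1 * (l * Ei)).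
Proof.
apply: inT_add.
  apply: (inT_mul' (d1 := 4) (b1 := 0) (d2 := 0) (b2 := 2)); [|by rewrite expr2; apply: (inT_mul' inT_Ei inT_Ei)|lia|lia].
  apply: (inT_mul' (d1 := 0) (b1 := 0) (d2 := 4) (b2 := 0) (inT_nat 6)); [|lia|lia].
  exists 'X^4; by rewrite pvXn expr0 mulr1 size_polyXn.
apply: inT_opp; apply: (inT_mul' (d1 := 0) (b1 := 0) (d2 := 1) (b2 := 1) inT_half); [|lia|lia].
exact: (inT_mul' inT_l inT_Ei).
Qed.

Lemma rho0 : rho != 0.
Proof. by apply/eqP => h; move: HRinv; rewrite h mulr0 => /eqP; rewrite eq_sym oner_eq0. Qed.

Lemma R_rec k : R k.+1 = rho * (2%:R^-1 * (6%:R * \sum_(i < k.+3) lam i * lam (k.+2 - i)%N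
                     - \sum_(i < k.+1) R i * R (k - i)%N - D (R k))).
Proof.
rewrite -HR; set S := \sum_(i < k.+1) _.
transitivity (R k.+1 * (Rm1 * rho) * (2%:R * 2%:R^-1)); first by rewrite HRinv divff // !mulr1.
ring.
Qed.

Notation g := (6%:R * l ^+ 4 * Ei ^+ 2 - 2%:R^-1 * (l * Ei)).

Lemma R0E : R 0%N = 2%:R^-1 * g.
Proof.
have L1 : lam 1%N = 0 := lam_odd 0.
have Rm1E : Rm1 = rho^-1 by apply: (mulIf rho0); rewrite HRinv mulVf // rho0.
move: HR0; rewrite !big_ord_recr big_ord0 /= L1 mulr0 mul0r !addr0 mulr0 Rm1E DV ?rho0 // HDrho.
move/eqP; rewrite addr_eq0 => /eqP E.
transitivity ((2%:R * rho^-1 * R 0%N) * (rho * 2%:R^-1)); first by field; rewrite H2 rho0.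
rewrite E; field; by rewrite H2 rho0.
Qed.

Lemma R_prop k : (forall n, k = (2 * n)%N -> inT (9 * n + 4) (5 * n + 2) (R k)) /\
                 (forall n, k = (2 * n).+1 -> inTr (9 * n + 8) (5 * n + 4) (R k)).
Proof.
elim/ltn_ind: k => k IH.
have IH1 : forall i n, (i < k)%N -> i = (2 * n)%N -> inT (9 * n + 4) (5 * n + 2) (R i).
  by move=> i n hi e; apply: (IH i hi).1 e.
have IH2 : forall i n, (i < k)%N -> i = (2 * n).+1 -> inTr (9 * n + 8) (5 * n + 4) (R i).
  by move=> i n hi e; apply: (IH i hi).2 e.
case: k IH IH1 IH2 => [|k] IH IH1 IH2.
  split=> n hn; last by lia.
  have -> : n = 0%N by lia.
  rewrite R0E; apply: (inT_mul' inT_half inT_g); lia.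
split=> n hn.
  move: hn; case: n => [|m] hn; first by lia.
  have ek : k = (2 * m).+1 by lia.
  have [S [hS ES]] : inTr (9 * m + 12) (5 * m + 6) (\sum_(i < k.+1) R i * R (k - i)%N).
    apply: inTr_sumo => i; have hi := ltn_ord i.
    have [a [Hi|Hi]] := parity i.
      have [Y [hY ->]] := IH2 (k - i)%N (m - a)%N ltac:(lia) ltac:(lia).
      exists (R i * Y); split; last by ring.
      apply: (inT_mul' (IH1 i a ltac:(lia) Hi) hY); lia.
    have [X [hX ->]] := IH2 i a ltac:(lia) Hi.
    exists (X * R (k - i)%N); split; last by ring.
    apply: (inT_mul' hX (IH1 (k - i)%N (m - a)%N ltac:(lia) ltac:(lia))); lia.
  have [X [hX EX]] := IH2 k m ltac:(lia) ek.
  rewrite R_rec ES EX HDmul HDrho ek Slam_odd.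
  rewrite (_ : rho * _ = rho ^+ 2 * (2%:R^-1 * (- (S + g * X + D X)))); last by ring.
  rewrite Hrho2; apply: (inT_mul' inT_lEi (d2 := 9 * m + 12) (b2 := 5 * m + 6)); [|lia|lia].
  apply: (inT_mul' inT_half (d2 := 9 * m + 12) (b2 := 5 * m + 6)); [|lia|lia].
  apply: inT_opp; apply: inT_add; first apply: inT_add.
  - exact: hS.
  - apply: (inT_mul' inT_g hX); lia.
  - apply: (inT_lift (d := 9 * m + 8 + 4) (b := 5 * m + 4 + 2)); [lia|lia|exact: inT_D hX].
have ek : k = (2 * n)%N by lia.
rewrite R_rec; eexists; split; last reflexivity.
apply: (inT_mul' (d1 := 0) (b1 := 0) (d2 := 9 * n + 8) (b2 := 5 * n + 4) inT_half); [|lia|lia].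
apply: inT_add; [apply: inT_add|apply: inT_opp].
- rewrite ek; apply: (inT_mul' (inT_nat 6) (Slam_even n)); lia.
- apply: inT_opp; apply: inT_sumo => i; have hi := ltn_ord i.
  have [a [Hi|Hi]] := parity i.
    apply: (inT_mul' (IH1 i a ltac:(lia) Hi) (IH1 (k - i)%N (n - a)%N ltac:(lia) ltac:(lia))); lia.
  have [X [hX ->]] := IH2 i a ltac:(lia) Hi.
  have [Y [hY ->]] := IH2 (k - i)%N (n - a)%N.-1 ltac:(lia) ltac:(lia).
  rewrite (_ : rho * X * (rho * Y) = rho ^+ 2 * (X * Y)); last by ring.
  rewrite Hrho2; apply: (inT_mul' inT_lEi (inT_mul hX hY)); lia.
- apply: (inT_lift (d := 9 * n + 4 + 4) (b := 5 * n + 2 + 2)); [lia|lia|].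
  by apply: inT_D; apply: (IH1 k n).
Qed.

End Main.

Unset Implicit Arguments.

Theorem mainTheorem19
  (K : fieldType) (iota : {rmorphism algC -> K}) (D : K -> K)
  (HDadd : forall x y, D (x + y) = D x + D y)
  (HDmul : forall x y, D (x * y) = D x * y + x * D y)
  (HDconst : forall a, D (iota a) = 0)
  (t c l s1 s2 : K) (Ht : D t = 1) (Hc : D c = 0)
  (Hl : 2 * l ^+ 3 + t * l + c = 0) (Hl0 : l != 0)
  (HDel0 : 4 * l ^+ 3 - c != 0)
  (Hs1 : s1 ^+ 2 = l) (Hs2 : s2 ^+ 2 = 4 * l ^+ 3 - c)
  (lam nu : nat -> K) (Hlam0 : lam 0%N = l) (Hnu0 : nu 0%N = 0)
  (Hlam : forall k, nu k.+1 = D (lam k))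
  (Hnu : forall k, D (nu k) = cubic_coef t c lam k.+1)
  (Rm1 : K) (R : nat -> K) (HRm1 : Rm1 = s2 / s1)
  (HR0 : 2 * Rm1 * R 0%N + D Rm1 = 6 * \sum_(i < 2) lam i * lam (1 - i)%N)
  (HR : forall k, 2 * Rm1 * R k.+1 + \sum_(i < k.+1) R i * R (k - i)%N + D (R k)
                  = 6 * \sum_(i < k.+3) lam i * lam (k.+2 - i)%N) :
  forall n : nat,
    (exists q : {poly {poly algC}}, (size q <= 9 * n + 5)%N /\
       R (2 * n)%N = peval2 iota q l c / (4 * l ^+ 3 - c) ^+ (5 * n + 2)) /\
    (exists q : {poly {poly algC}}, (size q <= 9 * n + 9)%N /\
       R (2 * n + 1)%N = s1 * peval2 iota q l c / s2 ^+ (10 * n + 9)).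
Proof.
move=> n.
set E := 4 * l ^+ 3 - c.
set Ei := E^-1.
have HEi : E * Ei = 1 by rewrite mulfV.
have H2 : (2 : K) != 0.
  have h : (2%:R : algC) != 0 by rewrite pnatr_eq0.
  by move: h; rewrite -(fmorph_eq0 iota) rmorph_nat.
have s10 : s1 != 0 by apply/eqP => h; move: Hl0; rewrite -Hs1 h expr0n eqxx.
have s20 : s2 != 0 by apply/eqP => h; move: HDel0; rewrite -Hs2 h expr0n eqxx.
have HDelta : (6 * l ^+ 2 + t) * (l * Ei) = 1.
  have hE : (6 * l ^+ 2 + t) * l = E.
    apply/eqP; rewrite -subr_eq0; apply/eqP.
    transitivity (2 * l ^+ 3 + t * l + c); first by rewrite /E; ring.
    by rewrite Hl.
  by rewrite mulrA hE.
have HDl : D l = - l ^+ 2 * Ei.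
  have h0 : D (2 * l ^+ 3 + t * l + c) = 0 by rewrite Hl (D0 HDadd).
  rewrite !HDadd (HDmul 2) (HDmul t) (DX HDmul HDconst) Ht Hc (Dnat HDconst) /= in h0.
  transitivity (D l * ((6 * l ^+ 2 + t) * (l * Ei))); first by rewrite HDelta mulr1.
  transitivity ((0 - l) * (l * Ei)); last by ring.
  rewrite -h0; ring.
have HDE : D E = - 12 * l ^+ 4 * Ei.
  rewrite /E (DB HDadd) Hc HDmul (DX HDmul HDconst) (Dnat HDconst) HDl /=; ring.
have HDEi : D Ei = 12 * l ^+ 4 * Ei ^+ 3.
  rewrite /Ei (DV HDmul HDconst) // HDE -/Ei; ring.
set rho := s1 / s2.
have HRinv : Rm1 * rho = 1 by rewrite HRm1 /rho; field; rewrite s10 s20.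
have HEs : Ei = (s2 ^+ 2)^-1 by rewrite Hs2.
have Hrho2 : rho ^+ 2 = l * Ei by rewrite HEs -Hs1 /rho; field.
have HDs1 : D s1 = D l / (2 * s1).
  have h := DX HDmul HDconst s1 2; rewrite Hs1 /= in h.
  rewrite h; field; by rewrite s10 H2.
have HDs2 : D s2 = D E / (2 * s2).
  have h := DX HDmul HDconst s2 2; rewrite Hs2 /= -/E in h.
  rewrite h; field; by rewrite s20 H2.
have HDrho : D rho = rho * (6 * l ^+ 4 * Ei ^+ 2 - 2^-1 * (l * Ei)).
  rewrite /rho HDmul (DV HDmul HDconst) // HDs1 HDs2 HDE HDl HEs -Hs1.
  field; by rewrite s10 s20 H2.
have RP := R_prop HDadd HDmul HDconst Hc HEi HDl HDEi HDelta Hlam0 Hnu0 Hlam Hnu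
   HRinv Hrho2 HDrho H2 HR0 HR.
split.
  have [P [hP ->]] := (RP (2 * n)%N).1 n erefl.
  by exists P; split; [lia| rewrite /Ei exprVn].
have [X [[P [hP ->]] ->]] := (RP (2 * n + 1)%N).2 n ltac:(lia).
exists P; split; first by lia.
rewrite HEs exprVn -exprM (_ : (10 * n + 9 = (2 * (5 * n + 4)).+1)%N); last by lia.
rewrite exprS /rho; field.
by rewrite s20 expf_neq0.
Qed.
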